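(* Let $n\in\mathbb N$, $\delta>0$, and let $d$ be a metric on $\mathbb R^n$ induced by a norm. Let $w_1,\dots,w_N$ be contractions on $(\mathbb R^n,d)$ with contractivity factors $\lambda_i\in[0,1)$, let $\lambda_{max}=\max_i\lambda_i$, and let $A_\infty$ be the attractor of the hyperbolic IFS $\{\mathbb R^n;w_1,\dots,w_N;q_1,\dots,q_N\}$ with constant probabilities $q_i\in(0,1]$, $\sum_iq_i=1$. Let $\{\mathcal D^n(\delta);\tilde w_1,\dots,\tilde w_N;p_1,\dots,p_N\}$ be a DIFS in which $\tilde w_i$ is the $\delta$-roundoff of $w_i$. Then, independently of the values of the probabilities $p_i(\cdot)$ and $q_i$, for every positive recurrent communication class $\mathcal A_k^+$ of the Markov chain associated with the DIFS, the Hausdorff distance (induced by $d$) satisfies $$h(\mathcal A_k^+,A_\infty)\le\theta(1-\lambda_{max})^{-1}.$$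
   Context: For $m\in\mathbb Z^n$, $C_\delta(m)=\prod_{j=1}^n[(m_j-\tfrac12)\delta,(m_j+\tfrac12)\delta)$; $\mathcal D^n(\delta)=\{\delta m:m\in\mathbb Z^n\}\subset\mathbb R^n$. The $\delta$-roundoff of $x\in\mathbb R^n$ is $\tilde x=\delta m$ where $x\in C_\delta(m)$; the $\delta$-roundoff of $w:\mathbb R^n\to\mathbb R^n$ is $\tilde w(\tilde x)=\widetilde{w(\tilde x)}$ on $\mathcal D^n(\delta)$. $\theta:=\tfrac12\operatorname{diam}_d(C_\delta(0))$. The attractor of a hyperbolic IFS is the unique nonempty compact $A_\infty\subset\mathbb R^n$ with $A_\infty=\bigcup_i w_i(A_\infty)$. A DIFS $\{S;\tilde w_1,\dots,\tilde w_N;p_1,\dots,p_N\}$ consists of $S\subset\mathcal D^n(\delta)$, maps $\tilde w_i:S\to S$ and functions $p_i:S\to(0,1]$ with $\sum_ip_i(\tilde x)=1$; its associated Markov chain has transition probabilities $P(\tilde x,\tilde y)=\sum_ip_i(\tilde x)\mathbf 1_{\{\tilde y\}}(\tilde w_i(\tilde x))$. State $\tilde y$ is accessible from $\tilde x$ if $P^k(\tilde x,\tilde y)>0$ for some $k\ge1$; two states communicate if each is accessible from the other; a communication class is a maximal nonempty set of states any two of which (not necessarily distinct) communicate. A state is recurrent if the chain started there returns to it in finitely many steps a.s., and positive recurrent if moreover the expected return time is finite; a positive recurrent communication class is a communication class of positive recurrent states. *)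

(* Defs.v *)
From HB Require Import structures.
From mathcomp Require Import all_boot all_order all_algebra.
From mathcomp Require Import all_classical all_reals all_analysis.
Set Implicit Arguments. Unset Strict Implicit. Unset Printing Implicit Defensive.
Import Order.TTheory GRing.Theory Num.Theory.
Import numFieldNormedType.Exports.
Local Open Scope classical_set_scope.
Local Open Scope ring_scope.

Section Defs.
Variable R : realType.
Variable n : nat.

Definition is_norm (nrm : 'rV[R]_n -> R) : Prop :=
  [/\ forall x, nrm x = 0 -> x = 0,
      forall (a : R) x, nrm (a *: x) = `|a| * nrm x &
      forall x y, nrm (x + y) <= nrm x + nrm y].

Definition dist (nrm : 'rV[R]_n -> R) (x y : 'rV[R]_n) : R := nrm (x - y).

Definition ifs_contraction (nrm : 'rV[R]_n -> R) (w : 'rV[R]_n -> 'rV[R]_n) (lam : R) :=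
  0 <= lam /\ lam < 1 /\ forall x y, dist nrm (w x) (w y) <= lam * dist nrm x y.

Definition latpt (delta : R) (m : 'rV[int]_n) : 'rV[R]_n :=
  delta *: map_mx (fun z : int => z%:~R) m.

Definition cell (delta : R) (m : 'rV[int]_n) : set 'rV[R]_n :=
  [set x | forall j, (m 0 j)%:~R * delta - delta / 2 <= x 0 j /\
                      x 0 j < (m 0 j)%:~R * delta + delta / 2].

(* the lattice index m of the cell containing x (so that x \in cell delta m) *)
Definition round_idx (delta : R) (x : 'rV[R]_n) : 'rV[int]_n :=
  \row_j Num.floor (x 0 j / delta + 2^-1).

(* delta-roundoff of a map w, on lattice indices: w~(delta m) = delta (round_idx (w (delta m))) *)
Definition roundoff_map (delta : R) (w : 'rV[R]_n -> 'rV[R]_n) (m : 'rV[int]_n)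
  : 'rV[int]_n := round_idx delta (w (latpt delta m)).

Definition theta (nrm : 'rV[R]_n -> R) (delta : R) : R :=
  2^-1 * sup [set r | exists x y, [/\ cell delta 0 x, cell delta 0 y & r = dist nrm x y]].

Definition hausdorff (nrm : 'rV[R]_n -> R) (A B : set 'rV[R]_n) : \bar R :=
  maxe (ereal_sup [set ereal_inf [set (dist nrm a b)%:E | b in B] | a in A])
       (ereal_sup [set ereal_inf [set (dist nrm a b)%:E | a in A] | b in B]).

Definition is_attractor (N : nat) (w : 'I_N -> 'rV[R]_n -> 'rV[R]_n)
  (A : set 'rV[R]_n) : Prop :=
  A !=set0 /\ compact A /\ A = \bigcup_(i in [set: 'I_N]) (w i @` A).

End Defs.

Section Chain.
Variable R : realType.
Variables (S : eqType) (N : nat).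
Variable W : 'I_N -> S -> S.
Variable p : 'I_N -> S -> R.

Definition traj (x : S) (s : seq 'I_N) : seq S := scanl (fun y i => W i y) x s.

Fixpoint pprob (x : S) (s : seq 'I_N) : R :=
  match s with [::] => 1 | i :: s' => p i x * pprob (W i x) s' end.

Definition Pk (k : nat) (x y : S) : R :=
  \sum_(s : k.-tuple 'I_N) pprob x s * ((last x (traj x s) == y) : nat)%:R.

Definition accessible (x y : S) : Prop := exists2 k, (1 <= k)%N & 0 < Pk k x y.
Definition communicate (x y : S) : Prop := accessible x y /\ accessible y x.

Definition communication_class (C : set S) : Prop :=
  C !=set0 /\ (forall x y, C x -> C y -> communicate x y) /\
  (forall D : set S, C `<=` D -> (forall x y, D x -> D y -> communicate x y) -> D = C).

Definition first_return (k : nat) (x : S) : R :=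
  \sum_(s : k.-tuple 'I_N)
     pprob x s * ((last x (traj x s) == x) && (x \notin take k.-1 (traj x s)) : nat)%:R.

Definition recurrent (x : S) : Prop :=
  (fun m => \sum_(1 <= k < m) first_return k x) @ \oo --> (1 : R).

Definition pos_recurrent (x : S) : Prop :=
  recurrent x /\ cvg ((fun m => \sum_(1 <= k < m) (k%:R * first_return k x)) @ \oo).

Definition pos_recurrent_class (C : set S) : Prop :=
  communication_class C /\ forall x, C x -> pos_recurrent x.

End Chain.

(* Main.v *)
Require Import Defs.
From HB Require Import structures.
From mathcomp Require Import all_boot all_order all_algebra.
From mathcomp Require Import all_classical all_reals all_analysis.
From mathcomp Require Import ring lra.
Import Order.TTheory GRing.Theory Num.Theory.
Import numFieldNormedType.Exports.
Local Open Scope classical_set_scope.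
Local Open Scope ring_scope.
Section MC.
Variable R : realType.
Variables (S : eqType) (N : nat) (W : 'I_N -> S -> S) (p : 'I_N -> S -> R).
Hypothesis p_pos : forall i x, 0 < p i x.
Hypothesis p_sum : forall x, \sum_(i < N) p i x = 1.

Definition run x (s : seq 'I_N) := foldl (fun y i => W i y) x s.

Lemma last_traj x s : last x (traj W x s) = run x s.
Proof. by elim: s x => //= i s IH x; rewrite IH. Qed.

Lemma pprob_gt0 x s : 0 < pprob W p x s.
Proof. by elim: s x => //= i s IH x; rewrite mulr_gt0. Qed.

Lemma PkP k x y : 0 < Pk W p k x y <-> exists s : k.-tuple 'I_N, run x s = y.
Proof.
split.
  move=> H; apply: contrapT => Hn; move: H; rewrite /Pk big1 ?ltxx// => s _.
  case: eqP => [E|_]; last by rewrite mulr0.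
  by exfalso; apply: Hn; exists s; rewrite -last_traj.
case=> s0 Hs0; rewrite /Pk (bigD1 s0)//= last_traj Hs0 eqxx mulr1.
rewrite ltr_pwDl ?pprob_gt0// sumr_ge0// => s _.
by rewrite mulr_ge0 ?ler0n// ltW// pprob_gt0.
Qed.

Lemma accP x y : accessible W p x y <->
  exists2 s : seq 'I_N, (0 < size s)%N & run x s = y.
Proof.
split.
  case=> k k1 /PkP [s Hs]; exists s => //; by rewrite size_tuple.
case=> s s1 Hs; exists (size s) => //; apply/PkP; by exists (in_tuple s).
Qed.

Lemma run_cat x s t : run x (s ++ t) = run (run x s) t.
Proof. by rewrite /run foldl_cat. Qed.

Lemma acc_trans x y z : accessible W p x y -> accessible W p y z ->
  accessible W p x z.
Proof.
move=> /accP [s s1 Hs] /accP [t t1 Ht]; apply/accP; exists (s ++ t).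
  by rewrite size_cat addn_gt0 s1.
by rewrite run_cat Hs.
Qed.

Lemma acc_step x i : accessible W p x (W i x).
Proof. by apply/accP; exists [:: i]. Qed.

Section Hit.
Variable x : S.
Definition F k y := \sum_(s : k.-tuple 'I_N) pprob W p y s *
  ((last y (traj W y s) == x) && (x \notin take k.-1 (traj W y s)) : nat)%:R.

Lemma F_ge0 k y : 0 <= F k y.
Proof. by rewrite sumr_ge0// => s _; rewrite mulr_ge0 ?ler0n// ltW// pprob_gt0. Qed.

Lemma sum_tupleS k (G : seq 'I_N -> R) :
  \sum_(t : (k.+1).-tuple 'I_N) G t =
  \sum_(i < N) \sum_(t : k.-tuple 'I_N) G (i :: t).
Proof.
rewrite pair_big /=.
rewrite (reindex (fun q : 'I_N * k.-tuple 'I_N => [tuple of q.1 :: q.2])) //=.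
exists (fun t : (k.+1).-tuple 'I_N => (thead t, [tuple of behead t])).
  by move=> [i t] _ /=; congr pair; apply: val_inj.
move=> t _; apply: val_inj => /=; case: t => -[|a l]//= _.
Qed.

Lemma F1 y : F 1 y = \sum_(i < N) p i y * (W i y == x)%:R.
Proof.
rewrite /F (sum_tupleS _ (fun s => pprob W p y s * ((last y (traj W y s) == x) && (x \notin take 0 (traj W y s)) : nat)%:R)).
apply: eq_bigr => i _.
rewrite (big_pred1 [tuple]) => [|t]; last first.
  by apply/esym/eqP/val_inj; case: t => -[].
by rewrite /= mulr1 andbT.
Qed.

Lemma FS k y : (0 < k)%N ->
  F k.+1 y = \sum_(i < N) p i y * ((W i y != x)%:R * F k (W i y)).
Proof.
case: k => // k _; rewrite /F (sum_tupleS _ (fun s => pprob W p y s * ((last y (traj W y s) == x) && (x \notin take k.+1 (traj W y s)) : nat)%:R)); apply: eq_bigr => i _.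
rewrite !big_distrr; apply: eq_bigr => t _ /=.
rewrite in_cons negb_or [x == W i y]eq_sym.
case E: (W i y == x); rewrite /= ?andbF ?mul0r ?mulr0 ?mul1r ?mulrA //.
Qed.

Definition H m y := \sum_(1 <= k < m) F k y.

Lemma HS m y : H m.+2 y =
  \sum_(i < N) p i y * ((W i y == x)%:R + (W i y != x)%:R * H m.+1 (W i y)).
Proof.
rewrite /H big_nat_recl // F1.
rewrite (@big_nat_cond _ _ _ 1 m.+1) /=.
rewrite (eq_bigr (fun k => \sum_(i < N) p i y * ((W i y != x)%:R * F k (W i y)))); last first.
  by move=> k; rewrite ?andbT => /andP[k0 _]; rewrite FS.
rewrite [X in _ + X]exchange_big /= -big_split /=; apply: eq_bigr => i _.
rewrite mulrDr; congr (_ + _); rewrite -mulr_sumr; congr (_ * _).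
rewrite -mulr_sumr; congr (_ * _).
rewrite [in RHS]big_nat_cond; by apply: eq_bigr => k _.
Qed.

Lemma H_ge0 m y : 0 <= H m y.
Proof. by rewrite /H sumr_ge0// => k _; exact: F_ge0. Qed.

Lemma H_le1 m y : H m y <= 1.
Proof.
elim: m y => [|[|m] IH] y; first by rewrite /H big_geq.
  by rewrite /H big_geq.
rewrite HS -[X in _ <= X](p_sum y) ler_sum// => i _.
rewrite -[X in _ <= X]mulr1 ler_wpM2l ?(ltW (p_pos _ _))//.
by case: (W i y == x) => /=; rewrite ?mulr1n ?mulr0n ?mul0r ?addr0 ?add0r ?mul1r// IH.
Qed.

Lemma H_gap i m : W i x != x -> (forall k, (0 < k)%N -> F k (W i x) = 0) ->
  H m x <= 1 - p i x.
Proof.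
move=> ne F0.
have pi1 : p i x <= 1.
  by rewrite -(p_sum x) (bigD1 i) //= lerDl sumr_ge0// => j _; rewrite ltW.
case: m => [|[|m]]; try by rewrite /H big_geq // subr_ge0.
rewrite HS -[X in _ <= X - _](p_sum x) (bigD1 i) //= (negbTE ne) /= mulr0n mulr1n add0r mul1r.
have -> : H m.+1 (W i x) = 0.
  by rewrite /H big_nat_cond big1 // => k /andP[/andP[k0 _] _]; rewrite F0.
rewrite mulr0 add0r [X in _ <= X - _](bigD1 i) //= addrAC subrr add0r ler_sum // => j _.
rewrite -[X in _ <= X]mulr1 ler_wpM2l ?(ltW (p_pos _ _))//.
by case: (W j x == x) => /=; rewrite ?mulr1n ?mulr0n ?mul0r ?addr0 ?add0r ?mul1r// H_le1.
Qed.

End Hit.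

Lemma rec_back x i : recurrent W p x -> accessible W p (W i x) x.
Proof.
move=> rec; case: (eqVneq (W i x) x) => [e|ne].
  by have := acc_step x i; rewrite e.
apply: contrapT => nacc.
have F0 : forall k, (0 < k)%N -> F x k (W i x) = 0.
  move=> k k0; rewrite /F big1 // => s _.
  case E: (_ && _); first last.
    by rewrite /= mulr0.
  move/andP: E => [/eqP e _]; exfalso; apply: nacc; apply/accP; exists s.
    by rewrite size_tuple.
  by rewrite -last_traj.
have Hb : forall m, H x m x <= 1 - p i x by move=> m; exact: H_gap.
have lim1 : lim (H x m x @[m --> \oo]) = 1 by apply: cvg_lim.
have : lim (H x m x @[m --> \oo]) <= 1 - p i x.
  apply: limr_le; first by apply/cvg_ex; exists 1.
  by apply: nearW => m; exact: Hb.
rewrite lim1 => h; have := p_pos i x; lra.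
Qed.

Lemma class_closed C : communication_class W p C ->
  (forall x, C x -> recurrent W p x) -> forall x i, C x -> C (W i x).
Proof.
move=> [C0 [Ccomm Cmax]] Crec x i Cx.
have xz := acc_step x i; have zx := rec_back x i (Crec x Cx).
have E : C `|` [set W i x] = C.
  apply: Cmax; first by move=> u Cu; left.
  move=> u v [Cu|->] [Cv|->].
  - exact: Ccomm.
  - split; first exact: acc_trans (Ccomm u x Cu Cx).1 xz.
    exact: acc_trans zx (Ccomm x u Cx Cu).1.
  - split; first exact: acc_trans zx (Ccomm x v Cx Cv).1.
    exact: acc_trans (Ccomm v x Cv Cx).1 xz.
  - split; exact: acc_trans zx xz.
by rewrite -E; right.
Qed.

Lemma class_run C : communication_class W p C ->
  (forall x, C x -> recurrent W p x) -> forall s x, C x -> C (run x s).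
Proof.
move=> hC hR; elim=> [|i s IH] x Cx //=; apply: IH; exact: class_closed.
Qed.
End MC.
Section Geo.
Variables (R : realType) (n : nat) (nrm : 'rV[R]_n -> R).
Hypothesis hn : is_norm nrm.

Lemma nrmZ a x : nrm (a *: x) = `|a| * nrm x.
Proof. by case: hn. Qed.
Lemma nrmD x y : nrm (x + y) <= nrm x + nrm y.
Proof. by case: hn. Qed.
Lemma nrm0 : nrm 0 = 0.
Proof. by have := nrmZ 0 0; rewrite scale0r normr0 mul0r. Qed.
Lemma nrmN x : nrm (- x) = nrm x.
Proof. by have := nrmZ (-1) x; rewrite scaleN1r normrN normr1 mul1r. Qed.
Lemma nrm_ge0 x : 0 <= nrm x.
Proof. have := nrmD x (- x); rewrite subrr nrm0 nrmN => h; lra. Qed.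

Lemma nrm_sum (I : finType) (F : I -> 'rV[R]_n) :
  nrm (\sum_i F i) <= \sum_i nrm (F i).
Proof.
elim/big_ind2: _ => //; first by rewrite nrm0.
move=> x1 x2 y1 y2 h1 h2; apply: le_trans (nrmD _ _) _; exact: lerD.
Qed.

Lemma nrm_coord v : nrm v <= \sum_j `|v 0 j| * nrm 'e_j.
Proof.
rewrite {1}(row_sum_delta v); apply: le_trans (nrm_sum _ _) _.
by apply: ler_sum => j _; rewrite nrmZ.
Qed.

Lemma dist_tri x y z : dist nrm x z <= dist nrm x y + dist nrm y z.
Proof. by rewrite /dist (_ : x - z = (x - y) + (y - z)) ?nrmD // addrA subrK. Qed.
Lemma dist_sym x y : dist nrm x y = dist nrm y x.
Proof. by rewrite /dist -nrmN opprB. Qed.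
Lemma dist_ge0 x y : 0 <= dist nrm x y.
Proof. exact: nrm_ge0. Qed.

Variable delta : R.
Hypothesis d0 : 0 < delta.

Definition Scell : set R := [set r | exists x y : 'rV[R]_n, [/\ cell delta 0 x, cell delta 0 y & r = dist nrm x y]].

Lemma cell0P (x : 'rV[R]_n) : cell delta 0 x <-> forall j, - (delta / 2) <= x 0 j < delta / 2.
Proof.
rewrite /cell; split => h j; have := h j; rewrite mxE mul0r sub0r add0r //.
  by case=> -> ->.
by case/andP.
Qed.

Lemma S0_ub r : Scell r -> r <= delta * \sum_j nrm ('e_j : 'rV[R]_n).
Proof.
case=> x [y [/cell0P hx /cell0P hy ->]].
apply: le_trans (nrm_coord _) _; rewrite mulr_sumr ler_sum // => j _.
rewrite ler_wpM2r ?nrm_ge0 // !mxE.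
have := hx j; have := hy j; move=> /andP[? ?] /andP[? ?].
rewrite ler_norml; apply/andP; split; lra.
Qed.

Lemma cell00 : cell delta 0 (0 : 'rV[R]_n).
Proof.
apply/cell0P => j; rewrite mxE; have h : 0 < delta / 2 by rewrite divr_gt0.
by apply/andP; split; [rewrite oppr_le0 ltW | ].
Qed.

Lemma S0_has_sup : has_sup Scell.
Proof.
split; first by exists 0, 0, 0; split => //; [exact: cell00 | exact: cell00 | rewrite /dist subrr nrm0].
by exists (delta * \sum_j nrm ('e_j : 'rV[R]_n)) => r /S0_ub.
Qed.

Lemma theta_eq : theta nrm delta = 2^-1 * sup Scell.
Proof. by []. Qed.

Lemma theta_ge0 : 0 <= theta nrm delta.
Proof.
have h0 : Scell 0.
  by exists 0, 0; split => //; [exact: cell00 | exact: cell00 | rewrite /dist subrr nrm0].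
by rewrite theta_eq mulr_ge0 //; apply: (sup_upper_bound S0_has_sup h0).
Qed.

Lemma theta_bound (y : 'rV[R]_n) : (forall j, - (delta / 2) <= y 0 j < delta / 2) ->
  nrm y <= theta nrm delta.
Proof.
move=> hy; have th0 := theta_ge0.
rewrite leNgt; apply/negP => lt.
set a := nrm y in lt *; set b := theta nrm delta in lt th0.
have a0 : 0 < a by apply: le_lt_trans lt.
pose t := (a + b) / (2 * a).
have t0 : 0 <= t by rewrite /t divr_ge0 // ?mulr_ge0 //; lra.
have t1 : t < 1 by rewrite /t ltr_pdivrMr ?mulr_gt0 // mul1r; lra.
have hta : t * a = (a + b) / 2.
  by rewrite /t; field; rewrite gt_eqF.
have cu : cell delta 0 (t *: y).
  apply/cell0P => j; rewrite mxE; case/andP: (hy j) => h1 h2.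
  by apply/andP; split; nra.
have cv : cell delta 0 (- (t *: y)).
  apply/cell0P => j; rewrite !mxE; case/andP: (hy j) => h1 h2.
  by apply/andP; split; nra.
have : Scell (dist nrm (t *: y) (- (t *: y))) by exists (t *: y), (- (t *: y)).
move/(sup_upper_bound S0_has_sup).
rewrite /dist opprK -scalerDl nrmZ ger0_norm ?addr_ge0 // mulrDl hta.
have : sup Scell = 2 * b by rewrite /b theta_eq mulrA mulfV ?mul1r.
move=> ->; lra.
Qed.

Lemma round_coord (x : 'rV[R]_n) j :
  - (delta / 2) <= (x - latpt delta (round_idx delta x)) 0 j < delta / 2.
Proof.
rewrite !mxE.
have := floor_itv (x 0 j / delta + 2^-1).
set f := Num.floor _; rewrite intrD => /andP[h1 h2].
have -> : x 0 j = (x 0 j / delta) * delta by rewrite divfK // gt_eqF.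
set u := x 0 j / delta in h1 h2 *.
set F := f%:~R in h1 h2 *; rewrite (_ : 1%:~R = 1) // in h2.
have e1 : 0 <= delta * (u + 2^-1 - F) by rewrite mulr_ge0 ?(ltW d0) // subr_ge0.
have e2 : 0 < delta * (F + 1 - (u + 2^-1)) by rewrite mulr_gt0 // subr_gt0.
apply/andP; split; nra.
Qed.

Lemma round_err (x : 'rV[R]_n) :
  nrm (x - latpt delta (round_idx delta x)) <= theta nrm delta.
Proof. by apply: theta_bound => j; apply: round_coord. Qed.

End Geo.

Lemma inf_le (R : realType) (U : Type) (B : set U) (f : U -> R) (T0 M L : R) :
  0 <= L < 1 -> (forall j, exists2 b, B b & f b <= T0 + L ^+ j * M) ->
  (ereal_inf [set (f b)%:E | b in B] <= T0%:E)%E.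
Proof.
move=> /andP[L0 L1] h; apply/lee_addgt0Pr => e e0.
have [j hj] : exists j, L ^+ j * M < e.
  case: (lerP M 0) => M0.
    by exists 0%N; rewrite expr0 mul1r; apply: le_lt_trans M0 e0.
  have : `|L| < 1 by rewrite ger0_norm.
  move=> /cvg_expr /cvgr0_norm_lt /(_ (e / M)) [].
    by rewrite divr_gt0.
  move=> j0 _ Hj; exists j0; have := Hj j0 (leqnn j0); rewrite /= ger0_norm ?exprn_ge0 //.
  by rewrite ltr_pdivlMr.
have [b Bb hb] := h j.
apply: le_trans (ereal_inf_lbound _) _; first by exists b.
rewrite lee_fin; lra.
Qed.

Section IFS.
Variables (R : realType) (n : nat) (nrm : 'rV[R]_n -> R) (delta : R) (N : nat)
  (w : 'I_N -> 'rV[R]_n -> 'rV[R]_n) (lam : 'I_N -> R) (A : set 'rV[R]_n).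
Hypotheses (hn : is_norm nrm) (d0 : 0 < delta)
  (hw : forall i, ifs_contraction nrm (w i) (lam i)) (hA : is_attractor w A).

Let L := \big[Num.max/0]_(i < N) lam i.

Lemma L_ge0 : 0 <= L.
Proof.
rewrite /L; elim/big_ind: _ => //; first by move=> x y hx hy; rewrite le_max hx.
by move=> i _; case: (hw i).
Qed.

Lemma lam_le i : lam i <= L.
Proof. exact: le_bigmax. Qed.

Lemma L_lt1 : L < 1.
Proof.
rewrite /L; elim/big_ind: _ => //; first by move=> x y hx hy; rewrite gt_max hx hy.
by move=> i _; case: (hw i) => _ [].
Qed.

Let T := theta nrm delta * (1 - L)^-1.

Lemma thetaT : theta nrm delta = T * (1 - L).
Proof. by rewrite /T mulfVK // subr_eq0 gt_eqF // L_lt1. Qed.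

Let X (m : 'rV[int]_n) := latpt delta m.
Let Wr i (m : 'rV[int]_n) := roundoff_map delta (w i) m.
Definition runw a (s : seq 'I_N) := foldl (fun a i => w i a) a s.

Lemma step i m a : dist nrm (X (Wr i m)) (w i a) - T <= L * (dist nrm (X m) a - T).
Proof.
have h1 : dist nrm (X (Wr i m)) (w i (X m)) <= theta nrm delta.
  by rewrite /dist -nrmN ?opprB //; apply: (@round_err _ _ _ hn _ d0).
have h2 : dist nrm (w i (X m)) (w i a) <= L * dist nrm (X m) a.
  case: (hw i) => _ [_ h]; apply: le_trans (h _ _) _.
  by rewrite ler_wpM2r ?lam_le // (@dist_ge0 _ _ _ hn).
have h3 := @dist_tri _ _ _ hn (X (Wr i m)) (w i (X m)) (w i a).
rewrite thetaT in h1; nra.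
Qed.

Lemma run_step s m a :
  dist nrm (X (run _ _ Wr m s)) (runw a s) - T <= L ^+ size s * (dist nrm (X m) a - T).
Proof.
elim: s m a => [|i s IH] m a /=; first by rewrite expr0 mul1r.
apply: le_trans (IH _ _) _; rewrite exprSr -mulrA ler_wpM2l ?exprn_ge0 ?L_ge0 //.
exact: step.
Qed.

Lemma A_stable i a : A a -> A (w i a).
Proof. by case: hA => _ [_ AE] Aa; rewrite AE; exists i => //; exists a. Qed.

Lemma A_back b : A b -> exists i a, A a /\ b = w i a.
Proof.
case: hA => _ [_ AE]; rewrite {1}AE => -[i _ [a Aa <-]].
by exists i, a.
Qed.

Lemma runw_stable s a : A a -> A (runw a s).
Proof. by elim: s a => [|i s IH] a Aa //=; apply: IH; apply: A_stable. Qed.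

Lemma A_decomp j b : A b -> exists s a, [/\ size s = j, A a & runw a s = b].
Proof.
elim: j b => [|j IH] b Ab; first by exists [::], b.
have [i [b1 [Ab1 ->]]] := A_back b Ab.
have [s [a [hs Aa ha]]] := IH _ Ab1.
by exists (rcons s i), a; rewrite size_rcons hs /runw foldl_rcons -/(runw a s) ha.
Qed.

Lemma A_bounded v : exists M, forall a, A a -> dist nrm v a <= M.
Proof.
case: hA => _ [Ac _].
have hj : forall j : 'I_n, exists Mj, forall a, A a -> `|a 0 j| <= Mj.
  move=> j; have : compact [set a 0 j | a in A].
    apply: continuous_compact => //; apply: continuous_subspaceT.
    exact: coord_continuous.
  move=> /compact_bounded [M [_ HM]]; exists (M + 1) => a Aa.
  apply: HM; [lra | by exists a].
have [Mf hM] := choice hj.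
exists (\sum_j (`|v 0 j| + Mf j) * nrm 'e_j) => a Aa.
rewrite /dist; apply: le_trans (@nrm_coord _ _ _ hn _) _; apply: ler_sum => j _.
rewrite ler_wpM2r ?(@nrm_ge0 _ _ _ hn) // !mxE.
by apply: le_trans (ler_normB _ _) _; rewrite lerD // hM.
Qed.

End IFS.

Theorem theorem14 (R : realType) (n : nat) (delta : R) (nrm : 'rV[R]_n -> R)
  (N : nat) (w : 'I_N -> 'rV[R]_n -> 'rV[R]_n) (lam : 'I_N -> R)
  (q : 'I_N -> R) (p : 'I_N -> 'rV[int]_n -> R)
  (Ainf : set 'rV[R]_n) (C : set 'rV[int]_n) :
  0 < delta ->
  is_norm nrm ->
  (forall i, ifs_contraction nrm (w i) (lam i)) ->
  (forall i, 0 < q i <= 1) -> \sum_(i < N) q i = 1 ->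
  is_attractor w Ainf ->
  (forall i m, 0 < p i m <= 1) -> (forall m, \sum_(i < N) p i m = 1) ->
  pos_recurrent_class (roundoff_map delta \o w) p C ->
  (hausdorff nrm (latpt delta @` C) Ainf <=
    (theta nrm delta * (1 - \big[Num.max/0]_(i < N) lam i)^-1)%:E)%E.
Proof.
move=> d0 hn hw _ _ hA hp hps [hC hrec].
have p_pos : forall i m, 0 < p i m by move=> i m; case/andP: (hp i m).
have hrec' : forall x, C x -> recurrent (roundoff_map delta \o w) p x.
  by move=> x Cx; case: (hrec x Cx).
have RS := @run_step _ _ _ _ _ _ _ hn d0 hw.
have L0 := @L_ge0 _ _ _ _ _ _ hw.
have L1 := @L_lt1 _ _ _ _ _ _ hw.
set L := \big[Num.max/0]_(i < N) lam i in RS L0 L1 *.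
set T := theta nrm delta * (1 - L)^-1 in RS *.
have LL : 0 <= L < 1 by rewrite L0 L1.
case: (hC) => C0 [Ccomm _].
rewrite /hausdorff ge_max; apply/andP; split; apply: ge_ereal_sup; rewrite /ubound /=.
- move=> _ [a [y Cy <-] <-].
  have [s s1 hs] := (@accP _ _ _ _ _ p_pos y y).1 (Ccomm y y Cy Cy).1.
  case: (hA) => -[a0 Aa0] _.
  apply: (@inf_le _ _ _ _ _ (Num.max 0 (dist nrm (latpt delta y) a0 - T)) L LL).
  elim=> [|r [b Ab hb]].
    exists a0 => //; rewrite expr0 mul1r.
    have : dist nrm (latpt delta y) a0 - T <= Num.max 0 (dist nrm (latpt delta y) a0 - T).
      by rewrite le_max lexx orbT.
    lra.
  exists (runw _ _ _ w b s); first exact: runw_stable.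
  have := RS s y b; rewrite hs => h.
  set M := Num.max 0 _ in hb *.
  have M0 : 0 <= M by rewrite le_max lexx.
  have Lr0 : 0 <= L ^+ r by rewrite exprn_ge0.
  have hk0 : 0 <= L ^+ size s by rewrite exprn_ge0.
  have hk : L ^+ size s <= L.
    move: s1; case: (size s) => // k _.
    by rewrite exprS -[X in _ <= X]mulr1 ler_wpM2l // exprn_ile1 // ltW.
  rewrite exprS.
  set d := dist nrm _ b in hb h; set d' := dist nrm _ _ in h *.
  set Lk := L ^+ size s in h hk hk0; set Lr := L ^+ r in hb Lr0 *.
  case: (lerP (d - T) 0) => hE.
    have : Lk * (d - T) <= 0 by rewrite mulr_ge0_le0.
    have : 0 <= L * Lr * M by rewrite !mulr_ge0.
    lra.
  have : Lk * (d - T) <= L * (d - T) by rewrite ler_wpM2r // ltW.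
  have : L * (d - T) <= L * (Lr * M) by rewrite ler_wpM2l //; lra.
  rewrite mulrA; lra.
- move=> _ [b Ab <-].
  have [c0 Cc0] := C0.
  have [M0 hM0] := @A_bounded _ _ _ _ _ _ hn hA (latpt delta c0).
  apply: (@inf_le _ _ _ (fun a => dist nrm a b) _ (Num.max 0 (M0 - T)) L LL) => j.
  have [s [b0 [hs Ab0 hb0]]] := @A_decomp _ _ _ _ _ hA j b Ab.
  exists (latpt delta (run _ _ (roundoff_map delta \o w) c0 s)).
    exists (run _ _ (roundoff_map delta \o w) c0 s) => //.
    exact: (@class_run _ _ _ _ _ p_pos hps _ hC hrec' s c0 Cc0).
  have h := RS s c0 b0; rewrite hb0 hs in h.
  rewrite -lerBlDl; apply: le_trans h _.
  rewrite ler_wpM2l ?exprn_ge0 //.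
  have := hM0 b0 Ab0; have : M0 - T <= Num.max 0 (M0 - T) by rewrite le_max lexx orbT.
  lra.
Qed.
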